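(* Let $(u_k)_{k\in\mathbb N}$ be a sequence generated by the proximal-gradient algorithm (with parameter $\eta>0$ and starting point $u_0\in U_{ad}\cap\mathrm{BV}(0,T)$), and assume that $\nabla F$ is Lipschitz continuous from $L^2(0,T)$ to $L^2(0,T)$ with modulus $L$. Then: (1) $(u_k)$ and $(\nabla F(u_k))$ are bounded in $L^2(0,T)$; (2) the sequence $(F(u_k)+G(u_k))_k$ is nonincreasing and convergent; (3) $\|u_{k+1}-u_k\|_{L^2(0,T)}\to0$; (4) $(u_k)$ converges weakly-$\star$ in $\mathrm{BV}(0,T)$ (in particular strongly in $L^1(0,T)$) to some $\bar u\in U_{ad}$.
   Context: $T>0$, $\beta>0$; $\nu_1<\dots<\nu_d$ are integers. $\mathrm{TV}(u):=\sup\{\int_0^T u\varphi'\,dt : \varphi\in C_c^1(0,T),\ \|\varphi\|_\infty\le 1\}$, $\mathrm{BV}(0,T)=\{u\in L^1(0,T):\mathrm{TV}(u)<\infty\}$ with norm $\|u\|_{L^1}+\mathrm{TV}(u)$; weak-$\star$ convergence in $\mathrm{BV}(0,T)$ refers to $\mathrm{BV}(0,T)$ as a dual of a separable Banach space (equivalently: $L^1$-convergence plus boundedness in $\mathrm{BV}$). $U_{ad}:=\{u\in L^1(0,T): u(t)\in\{\nu_1,\dots,\nu_d\}\text{ a.e.}\}$. $F:L^1(0,T)\to\mathbb R$ is bounded from below and Gâteaux differentiable on $L^2(0,T)$ with gradient $\nabla F(u)\in L^2(0,T)$. $G:L^2(0,T)\to\mathbb R\cup\{\infty\}$, $G(u):=\beta\mathrm{TV}(u)+\delta_{U_{ad}}(u)$,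 where $\delta_{U_{ad}}(u)=0$ if $u\in U_{ad}$ and $\infty$ otherwise. Proximal-gradient algorithm: given $u_0$ and $\eta>0$, for $k=0,1,2,\dots$ choose $\tau_k>0$ and a solution $u_{k+1}$ of $\min_{u\in L^2(0,T)} F(u_k)+(\nabla F(u_k),u-u_k)_{L^2}+\frac{\tau_k}2\|u-u_k\|_{L^2}^2+G(u)$ such that $\eta\|u_{k+1}-u_k\|_{L^2}^2\le F(u_k)+\beta\mathrm{TV}(u_k)-(F(u_{k+1})+\beta\mathrm{TV}(u_{k+1}))$; a sequence is generated by the algorithm if such choices are made at every step. *)

(* Defs.v *)
From HB Require Import structures.
From mathcomp Require Import all_boot all_order all_algebra.
From mathcomp Require Import all_classical all_reals all_analysis.
Set Implicit Arguments. Unset Strict Implicit. Unset Printing Implicit Defensive.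
Import Order.TTheory GRing.Theory Num.Theory.
Import numFieldNormedType.Exports.
Local Open Scope classical_set_scope.
Local Open Scope ring_scope.

(* Functions on (0,T) are represented by functions R -> R; only their
   restriction to the open interval D T = ]0,T[ matters, up to a.e. equality. *)

Section Defs.
Variable R : realType.
Local Notation leb := (@lebesgue_measure R).

Definition Dom (T : R) : set R := `]0, T[.

Definition inL1 (T : R) (u : R -> R) : Prop :=
  leb.-integrable (Dom T) (EFin \o u).

Definition inL2 (T : R) (u : R -> R) : Prop :=
  measurable_fun (Dom T) u /\
  (\int[leb]_(x in Dom T) ((u x) ^+ 2)%:E < +oo)%E.

Definition L2inner (T : R) (u v : R -> R) : R :=
  fine (\int[leb]_(x in Dom T) (u x * v x)%:E).

Definition L2norm (T : R) (u : R -> R) : R :=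
  Num.sqrt (fine (\int[leb]_(x in Dom T) ((u x) ^+ 2)%:E)).

Definition L1norm (T : R) (u : R -> R) : \bar R :=
  \int[leb]_(x in Dom T) (`|u x|)%:E.

Definition Cc1 (T : R) (phi : R -> R) : Prop :=
  (forall x, derivable phi x 1) /\ continuous (derive1 phi) /\
  exists a b : R, [/\ 0 < a, a < b, b < T &
    forall x, x < a \/ b < x -> phi x = 0].

Definition TV (T : R) (u : R -> R) : \bar R :=
  ereal_sup [set (\int[leb]_(x in Dom T) (u x * derive1 phi x)%:E)%E
            | phi in [set phi | Cc1 T phi /\ forall x, `|phi x| <= 1]].

Definition inBV (T : R) (u : R -> R) : Prop :=
  inL1 T u /\ (TV T u < +oo)%E.

Definition Uad (T : R) (d : nat) (nu : 'I_d -> int) (u : R -> R) : Prop :=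
  inL1 T u /\ {ae leb, forall x, Dom T x -> exists i : 'I_d, u x = (nu i)%:~R}.

Definition Gfun (T beta : R) (d : nat) (nu : 'I_d -> int) (u : R -> R) : \bar R :=
  if `[< Uad T nu u >] then (beta%:E * TV T u)%E else +oo%E.

Definition ae_eq (T : R) (u v : R -> R) : Prop :=
  {ae leb, forall x, Dom T x -> u x = v x}.

Definition F_assumptions (T : R) (F : (R -> R) -> R)
    (gradF : (R -> R) -> (R -> R)) : Prop :=
  [/\ (forall u v, inL1 T u -> inL1 T v -> ae_eq T u v -> F u = F v),
      (exists m : R, forall u, inL1 T u -> m <= F u),
      (forall u, inL2 T u -> inL2 T (gradF u)) &
      (forall u h, inL2 T u -> inL2 T h ->
         (fun s : R => (F (fun x => u x + s * h x) - F u) / s) @ 0^'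
           --> L2inner T (gradF u) h)].

Definition prox_obj (T beta : R) (d : nat) (nu : 'I_d -> int)
    (F : (R -> R) -> R) (gradF : (R -> R) -> (R -> R))
    (uk : R -> R) (tau : R) (v : R -> R) : \bar R :=
  ((F uk + L2inner T (gradF uk) (fun x => v x - uk x)
     + tau / 2 * (L2norm T (fun x => v x - uk x)) ^+ 2)%:E
   + Gfun T beta nu v)%E.

Definition prox_grad_seq (T beta : R) (d : nat) (nu : 'I_d -> int)
    (F : (R -> R) -> R) (gradF : (R -> R) -> (R -> R)) (eta : R)
    (u : nat -> R -> R) : Prop :=
  exists tau : nat -> R, forall k : nat,
    [/\ 0 < tau k,
        inL2 T (u k.+1),
        (forall v, inL2 T v ->
           (prox_obj T beta nu F gradF (u k) (tau k) (u k.+1)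
            <= prox_obj T beta nu F gradF (u k) (tau k) v)%E) &
        ((eta * (L2norm T (fun x => u k.+1 x - u k x)) ^+ 2)%:E
           + ((F (u k.+1))%:E + beta%:E * TV T (u k.+1))
         <= (F (u k))%:E + beta%:E * TV T (u k))%E].

End Defs.

(* Main.v *)
Require Import Defs.
From HB Require Import structures.
From mathcomp Require Import all_boot all_order all_algebra.
From mathcomp Require Import all_classical all_reals all_analysis.
From mathcomp Require Import ring lra measurable_realfun zify.
Import Order.TTheory GRing.Theory Num.Theory.
Import numFieldNormedType.Exports.
Local Open Scope classical_set_scope.
Local Open Scope ring_scope.
Section Aux.
Context {R : realType}.
Local Notation mu := (@lebesgue_measure R).
Context (T : R) (T0 : 0 < T).
Local Notation D := (Dom T).

Lemma aeS (P Q : R -> Prop) : (forall x, P x -> Q x) ->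
  {ae mu, forall x, P x} -> {ae mu, forall x, Q x}.
Proof. move=> H PA; apply: filterS; [exact (ae_filter_ringOfSetsType mu)| exact: H| exact: PA]. Qed.

Lemma aeS2 (P1 P2 Q : R -> Prop) : (forall x, P1 x -> P2 x -> Q x) ->
  {ae mu, forall x, P1 x} -> {ae mu, forall x, P2 x} -> {ae mu, forall x, Q x}.
Proof. move=> H PA PB; apply: filterS2; [exact (ae_filter_ringOfSetsType mu)|exact: H| exact: PA| exact: PB]. Qed.

Lemma mD : measurable D.
Proof. exact: measurable_itv. Qed.

Lemma muD : mu D = T%:E.
Proof. by rewrite /Dom lebesgue_measure_itv/= lte_fin T0/= -EFinD subr0. Qed.

Lemma L2sq f : inL2 T f -> (((L2norm T f) ^+ 2)%:E = \int[mu]_(x in D) ((f x) ^+ 2)%:E)%E.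
Proof.
case=> mf fin.
have i0 : (0 <= \int[mu]_(x in D) ((f x) ^+ 2)%:E)%E.
  by apply: integral_ge0 => x _; rewrite lee_fin sqr_ge0.
rewrite /L2norm sqr_sqrtr; last exact: fine_ge0.
by rewrite fineK// ge0_fin_numE.
Qed.

Lemma L2bound (f : R -> R) (M : R) : measurable_fun D f -> 0 <= M ->
  {ae mu, forall x, D x -> `|f x| <= M} ->
  inL2 T f /\ L2norm T f <= M * Num.sqrt T.
Proof.
move=> mf M0 ae.
have mf2 : measurable_fun D (EFin \o (fun x => (f x) ^+ 2)).
  by apply/measurable_EFinP; apply: measurable_funX.
have le : (\int[mu]_(x in D) ((f x) ^+ 2)%:E <= (M ^+ 2 * T)%:E)%E.
  rewrite EFinM -muD -integral_cst; last exact: mD.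
  apply: ae_ge0_le_integral => //.
  - exact: mD.
  - by move=> x _; rewrite lee_fin sqr_ge0.
  - by move=> x _; rewrite lee_fin sqr_ge0.
  - apply: aeS ae => x H Dx; rewrite /cst lee_fin -real_normK ?num_real//.
    by rewrite ler_sqr ?nnegrE ?H// normr_ge0.
have i0 : (0 <= \int[mu]_(x in D) ((f x) ^+ 2)%:E)%E.
  by apply: integral_ge0 => x _; rewrite lee_fin sqr_ge0.
split; first by split => //; apply: le_lt_trans le _; rewrite ltey.
have -> : M * Num.sqrt T = Num.sqrt (M ^+ 2 * T).
  by rewrite sqrtrM ?sqr_ge0// sqrtr_sqr ger0_norm.
rewrite /L2norm ler_wsqrtr//.
by rewrite -lee_fin fineK// ge0_fin_numE// (le_lt_trans le)// ltey.
Qed.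

End Aux.
Section TVS.
Context {R : realType}.
Local Notation mu := (@lebesgue_measure R).

Lemma Cc1_0 (T : R) : 0 < T -> Cc1 T (cst 0).
Proof.
move=> T0; split.
- by move=> x; exact: derivable_cst.
split.
- have -> : derive1 (cst (0:R)) = cst 0 by apply/funext => x; rewrite derive1_cst.
  exact: cst_continuous.
exists (T / 3), (T / 2); split => //; try lra.
Qed.

Lemma TV_ge0 (T : R) (v : R -> R) : 0 < T -> (0 <= TV T v)%E.
Proof.
move=> T0; apply: ereal_sup_ubound; exists (cst 0).
  by split; [exact: Cc1_0|move=> x; rewrite normr0].
have -> : derive1 (cst (0:R)) = cst 0 by apply/funext => x; rewrite derive1_cst.
by under eq_integral do rewrite mulr0; rewrite integral0.
Qed.

End TVS.
Section Aux2.
Context {R : realType}.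
Local Notation mu := (@lebesgue_measure R).
Context (T : R) (T0 : 0 < T).
Local Notation D := (Dom T).

Lemma mEsq (f : R -> R) : measurable_fun D f ->
  measurable_fun D (fun x => ((f x) ^+ 2)%:E).
Proof. by move=> mf; apply/measurable_EFinP; apply: measurable_funX. Qed.

Lemma L2add (a b : R -> R) : inL2 T a -> inL2 T b ->
  inL2 T (fun x => a x + b x) /\
  (L2norm T (fun x => a x + b x)) ^+ 2 <= 2 * (L2norm T a) ^+ 2 + 2 * (L2norm T b) ^+ 2.
Proof.
move=> La Lb; have [ma _] := La; have [mb _] := Lb.
have mab : measurable_fun D (fun x => a x + b x) by exact: measurable_funD.
have key : (\int[mu]_(x in D) ((a x + b x) ^+ 2)%:E <=
    (2 * (L2norm T a) ^+ 2 + 2 * (L2norm T b) ^+ 2)%:E)%E.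
  apply: (@le_trans _ _ (\int[mu]_(x in D) ((2%:E * ((a x) ^+ 2)%:E) + (2%:E * ((b x) ^+ 2)%:E)))%E).
    apply: ge0_le_integral.
    - exact: mD.
    - by move=> x _; rewrite lee_fin sqr_ge0.
    - exact: mEsq.
    - by apply: emeasurable_funD; apply: emeasurable_funM => //; apply: mEsq.
    - move=> x _; rewrite -!EFinM -EFinD lee_fin.
      by have := sqr_ge0 (a x - b x); nra.
  rewrite ge0_integralD//; first last.
  - by apply: emeasurable_funM => //; apply: mEsq.
  - by move=> x _; rewrite mule_ge0// lee_fin sqr_ge0.
  - by apply: emeasurable_funM => //; apply: mEsq.
  - by move=> x _; rewrite mule_ge0// lee_fin sqr_ge0.
  - exact: mD.
  rewrite !ge0_integralZl_EFin//; first last.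
  - exact: mEsq.
  - by move=> x _; rewrite lee_fin sqr_ge0.
  - exact: mD.
  - exact: mEsq.
  - by move=> x _; rewrite lee_fin sqr_ge0.
  - exact: mD.
  by rewrite -(L2sq _ _ La) -(L2sq _ _ Lb) -!EFinM -EFinD.
have Lab : inL2 T (fun x => a x + b x).
  by split => //; apply: le_lt_trans key _; rewrite ltey.
by split => //; rewrite -lee_fin (L2sq _ _ Lab).
Qed.

Lemma L2opp (b : R -> R) : inL2 T b ->
  inL2 T (fun x => - b x) /\ L2norm T (fun x => - b x) = L2norm T b.
Proof.
move=> [mb fb]; split; last first.
  by rewrite /L2norm; under eq_integral => x _ do rewrite sqrrN.
split; first exact: measurableT_comp.
by under eq_integral => x _ do rewrite sqrrN.
Qed.

Lemma L2norm_ge0 (f : R -> R) : 0 <= L2norm T f.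
Proof. exact: sqrtr_ge0. Qed.

End Aux2.
Arguments L2add {R T a b}.
Arguments L2opp {R T b}.
Section Main.
Context {R : realType}.
Local Notation mu := (@lebesgue_measure R).
Context (T beta eta Lip : R) (d : nat) (nu : 'I_d -> int)
  (F : (R -> R) -> R) (gradF : (R -> R) -> (R -> R)) (u : nat -> R -> R).
Context (hT : 0 < T) (hb : 0 < beta) (he : 0 < eta).
Context (m : R) (hm : forall v, inL1 T v -> m <= F v).
Context (hg : forall v, inL2 T v -> inL2 T (gradF v)).
Context (hL : forall v w, inL2 T v -> inL2 T w ->
     L2norm T (fun x => gradF v x - gradF w x)
       <= Lip * L2norm T (fun x => v x - w x)).
Context (hU0 : Uad T nu (u 0%N)) (hBV0 : inBV T (u 0%N)).
Context (tau : nat -> R).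
Context (Htau : forall k : nat,
    [/\ 0 < tau k,
        inL2 T (u k.+1),
        (forall v, inL2 T v ->
           (prox_obj T beta nu F gradF (u k) (tau k) (u k.+1)
            <= prox_obj T beta nu F gradF (u k) (tau k) v)%E) &
        ((eta * (L2norm T (fun x => u k.+1 x - u k x)) ^+ 2)%:E
           + ((F (u k.+1))%:E + beta%:E * TV T (u k.+1))
         <= (F (u k))%:E + beta%:E * TV T (u k))%E]).
Local Notation D := (Dom T).

Definition C : R := \sum_(i < d) `|(nu i)%:~R : R|.

Lemma C_ge i : `|(nu i)%:~R : R| <= C.
Proof.
by rewrite /C (bigD1 i)//= lerDl sumr_ge0// => j _; rewrite normr_ge0.
Qed.

Lemma C_ge0 : 0 <= C.
Proof. by rewrite sumr_ge0// => j _; rewrite normr_ge0. Qed.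

Lemma Uad_meas {v} : Uad T nu v -> measurable_fun D v.
Proof. by case=> /measurable_int/measurable_EFinP. Qed.

Lemma Uad_bound {v} : Uad T nu v -> {ae mu, forall x, D x -> `|v x| <= C}.
Proof. case=> _; apply: aeS => x H /H [i ->]; exact: C_ge. Qed.

Lemma Uad_L2 {v} : Uad T nu v -> inL2 T v /\ L2norm T v <= C * Num.sqrt T.
Proof. move=> U; apply: L2bound => //; [exact: Uad_meas U|exact: C_ge0|exact: Uad_bound U]. Qed.

Lemma diff_L2 v w : Uad T nu v -> Uad T nu w ->
  inL2 T (fun x => v x - w x) /\
  L2norm T (fun x => v x - w x) <= (C + C) * Num.sqrt T.
Proof.
move=> Uv Uw; apply: L2bound => //.
- by apply: measurable_funB; exact: Uad_meas.
- by rewrite addr_ge0// C_ge0.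
- apply: aeS2; [|exact: (Uad_bound Uv)|exact: (Uad_bound Uw)].
  move=> x H1 H2 Dx.
  by rewrite (le_trans (ler_normB _ _))// lerD// ?H1 ?H2.
Qed.

Lemma int_sq_ge1 (z : int) : z != 0 -> 1 <= (z%:~R : R) ^+ 2.
Proof.
move=> z0; have -> : (z%:~R : R) ^+ 2 = (z * z)%:~R by rewrite intrM expr2.
rewrite ler1z; move: z0 => /eqP z0; nia.
Qed.

Lemma prox_self k : Uad T nu (u k) ->
  prox_obj T beta nu F gradF (u k) (tau k) (u k) =
  ((F (u k))%:E + beta%:E * TV T (u k))%E.
Proof.
move=> Uk; rewrite /prox_obj /Gfun; case: ifPn => [_|/asboolP//].
have -> : L2inner T (gradF (u k)) (fun x => u k x - u k x) = 0.
  by rewrite /L2inner; under eq_integral => x _ do rewrite subrr mulr0; rewrite integral0.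
have -> : L2norm T (fun x => u k x - u k x) = 0.
  rewrite /L2norm; under eq_integral => x _ do rewrite subrr expr0n/=.
  by rewrite integral0/= sqrtr0.
by rewrite expr0n/= mulr0 !addr0.
Qed.

Lemma all_k k : [/\ Uad T nu (u k), inL2 T (u k) & (TV T (u k) < +oo)%E].
Proof.
elim: k => [|k [Uk L2k TVk]].
  by split => //; [exact: (Uad_L2 hU0).1|exact: hBV0.2].
have [_ L2k1 Hmin H4] := Htau k.
have TVk0 := TV_ge0 T (u k) hT.
have fin : ((F (u k))%:E + beta%:E * TV T (u k) < +oo)%E.
  rewrite -(fineK (x:=TV T (u k))) ?ge0_fin_numE// -EFinM -EFinD; exact: ltry.
have Uk1 : Uad T nu (u k.+1).
  have := Hmin _ L2k; rewrite prox_self// /prox_obj /Gfun.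
  case: ifPn => [/asboolP//|_]; rewrite addey// => H.
  by rewrite leye_eq in H; move: fin; rewrite (eqP H) ltxx.
split => //.
have TV1 := TV_ge0 T (u k.+1) hT.
rewrite ltNge leye_eq; apply/negP => /eqP E1.
move: H4; rewrite E1 gt0_muley ?lte_fin//. rewrite (@addey _ (F (u k.+1))%:E)// addey//.
by rewrite leye_eq => /eqP E2; move: fin; rewrite E2 ltxx.
Qed.
Lemma TVfin k : TV T (u k) = (fine (TV T (u k)))%:E.
Proof.
have [_ _ TVk] := all_k k.
by rewrite fineK// ge0_fin_numE// TV_ge0.
Qed.

Definition E k : R := F (u k) + beta * fine (TV T (u k)).

Lemma EE k : ((F (u k))%:E + beta%:E * TV T (u k))%E = (E k)%:E.
Proof. by rewrite TVfin /E -EFinM -EFinD. Qed.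

Lemma Gfun_k k : Gfun T beta nu (u k) = (beta%:E * TV T (u k))%E.
Proof. by rewrite /Gfun; case: ifPn => // /asboolP; have [] := all_k k. Qed.

Definition dn k : R := L2norm T (fun x => u k.+1 x - u k x).

Lemma desc k : eta * dn k ^+ 2 + E k.+1 <= E k.
Proof. by have [_ _ _] := Htau k; rewrite !EE -EFinD lee_fin. Qed.

Lemma dn_ge0 k : 0 <= dn k.
Proof. exact: sqrtr_ge0. Qed.

Lemma E_noninc : nonincreasing_seq E.
Proof.
apply/nonincreasing_seqP => k; apply: le_trans (desc k).
by rewrite lerDr mulr_ge0 ?sqr_ge0// ltW.
Qed.

Lemma TVk_ge0 k : 0 <= fine (TV T (u k)).
Proof. by apply: fine_ge0; apply: TV_ge0. Qed.

Lemma E_ge k : m <= E k.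
Proof.
have [[L1 _] _ _] := all_k k.
by rewrite /E (le_trans (hm _ L1))// lerDl mulr_ge0 ?TVk_ge0// ltW.
Qed.

Definition El := limn E.

Lemma E_cvg : E @ \oo --> El.
Proof.
apply: nonincreasing_is_cvgn; first exact: E_noninc.
by exists m => _ [k _ <-]; exact: E_ge.
Qed.

Lemma dn_sq k : dn k ^+ 2 <= (E k - E k.+1) / eta.
Proof. by rewrite ler_pdivlMr// mulrC lerBrDr desc. Qed.

Lemma dn_cvg : dn @ \oo --> 0.
Proof.
apply: (@squeeze_cvgr _ _ _ _ (cst 0) (fun k => Num.sqrt ((E k - E k.+1) / eta))).
- apply: nearW => k; rewrite dn_ge0/=.
  by move: (ler_wsqrtr (dn_sq k)); rewrite sqrtr_sqr ger0_norm ?dn_ge0.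
- exact: cvg_cst.
- rewrite -sqrtr0; apply: (cvg_comp (fun k => (E k - E k.+1) / eta) (@Num.sqrt R)); last exact: sqrt_continuous.
  rewrite -(mul0r eta^-1); apply: cvgMl.
  rewrite -(subrr El); apply: cvgB; first exact: E_cvg.
  by rewrite (cvg_shiftS E); exact: E_cvg.
Qed.

Lemma dn_sum n : \sum_(k < n) dn k ^+ 2 <= (E 0%N - m) / eta.
Proof.
have H : forall n, \sum_(k < n) dn k ^+ 2 <= (E 0%N - E n) / eta.
  elim=> [|n' IH]; first by rewrite big_ord0 subrr mul0r.
  rewrite big_ord_recr/= (le_trans (lerD IH (dn_sq n')))//.
  by rewrite -mulrDl addrA subrK.
by apply: le_trans (H n) _; rewrite ler_pM2r ?invr_gt0// lerB// E_ge.
Qed.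
Lemma part1 : exists M : R, forall k,
  L2norm T (u k) <= M /\ L2norm T (gradF (u k)) <= M.
Proof.
have [_ L20 _] := all_k 0.
set K := `|Lip| * ((C + C) * Num.sqrt T).
set G0 := L2norm T (gradF (u 0%N)).
exists (Num.max (C * Num.sqrt T) (Num.sqrt (2 * K ^+ 2 + 2 * G0 ^+ 2))).
move=> k; have [Uk L2k _] := all_k k; split.
  by rewrite le_max (Uad_L2 Uk).2.
rewrite le_max; apply/orP; right.
have g0L := hg _ L20; have gkL := hg _ L2k.
have [dL _] := L2add gkL (L2opp g0L).1.
have dle : L2norm T (fun x => gradF (u k) x - gradF (u 0%N) x) <= K.
  apply: le_trans (hL _ _ L2k L20) _.
  apply: le_trans (ler_wpM2r (L2norm_ge0 _ _) (ler_norm Lip)) _.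
  by apply: ler_wpM2l => //; exact: (diff_L2 _ _ Uk hU0).2.
have [_ H] := L2add dL g0L.
have -> : gradF (u k) = (fun x => (gradF (u k) x - gradF (u 0%N) x) + gradF (u 0%N) x).
  by apply/funext => x; rewrite subrK.
rewrite -(ger0_norm (L2norm_ge0 _ _)) -sqrtr_sqr ler_wsqrtr// (le_trans H)//.
rewrite lerD2r ler_pM2l// ler_sqr ?nnegrE ?L2norm_ge0//.
by rewrite (le_trans (L2norm_ge0 _ _) dle).
Qed.
Lemma part2 : (forall k, ((F (u k.+1))%:E + Gfun T beta nu (u k.+1)
                    <= (F (u k))%:E + Gfun T beta nu (u k))%E) /\
       exists l : R, ((F (u k))%:E + Gfun T beta nu (u k))%E @[k --> \oo] --> l%:E.
Proof.
split.
  move=> k; rewrite !Gfun_k !EE lee_fin; exact: E_noninc.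
exists El.
have -> : (fun k => ((F (u k))%:E + Gfun T beta nu (u k))%E) = (fun k => (E k)%:E).
  by apply/funext => k; rewrite Gfun_k EE.
by apply: cvg_EFin; [exact: nearW|exact: E_cvg].
Qed.

Definition S k : set R := D `&` [set x | u k.+1 x != u k x].

Lemma mS k : measurable (S k).
Proof.
have [Uk _ _] := all_k k; have [Uk1 _ _] := all_k k.+1.
have mf : measurable_fun D (fun x => u k.+1 x - u k x).
  by apply: measurable_funB; exact: Uad_meas.
have := mf (mD T) (~` [set 0]) (measurableC (measurable_set1 0)).
congr measurable; apply/seteqP; split => x [Dx /=].
  by move=> H; split => //=; apply/eqP => e; apply: H; rewrite /= e subrr.
by move=> /eqP ne; split => // e; apply: ne; apply/eqP; rewrite -subr_eq0 e.
Qed.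

Lemma muS k : (mu (S k) <= (dn k ^+ 2)%:E)%E.
Proof.
have [Uk _ _] := all_k k; have [Uk1 _ _] := all_k k.+1.
have [L2d _] := diff_L2 _ _ Uk1 Uk.
have E1 : S k `&` D = S k.
  by apply/seteqP; split => [x []//|x Sx]; split => //; case: Sx.
have -> : mu (S k) = (\int[mu]_(x in D) (\1_(S k) x)%:E)%E.
  by rewrite integral_indic ?mS; [rewrite E1|exact: measurable_itv|exact: mS].
rewrite /dn (L2sq _ _ L2d).
apply: ae_ge0_le_integral.
- exact: mD.
- by move=> x _; rewrite lee_fin indicE ler0n.
- by apply/measurable_EFinP; apply: measurable_indic; exact: mS.
- by move=> x _; rewrite lee_fin sqr_ge0.
- apply: mEsq; apply: measurable_funB; exact: Uad_meas.
- apply: aeS2; [|exact: Uk1.2|exact: Uk.2].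
  move=> x H1 H2 Dx; rewrite lee_fin indicE.
  case: (boolP (x \in S k)) => [/set_mem [_ /= ne]|_]; last by rewrite sqr_ge0.
  have [i ei] := H1 Dx; have [j ej] := H2 Dx.
  move: ne; rewrite ei ej -intrB => ne; apply: int_sq_ge1.
  by apply: contra ne => /eqP e; rewrite -subr_eq0 -intrB e.
Qed.
Lemma sumS : (\sum_(n <oo) mu (S n) < +oo)%E.
Proof.
apply: (@le_lt_trans _ _ ((E 0%N - m) / eta)%:E); last exact: ltry.
apply: lime_le.
  by apply: is_cvg_nneseries => n _ _; exact: measure_ge0.
apply: nearW => n /=.
have := @lee_sum _ _ (fun k => mu (S k)) (fun k => (dn k ^+ 2)%:E) (index_iota 0 n) xpredT (fun k _ => muS k).
move/le_trans; apply.
by rewrite sumEFin lee_fin big_mkord; exact: dn_sum.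
Qed.

Lemma limsup0 : mu (lim_sup_set S) = 0%E.
Proof. exact (@lim_sup_set_cvg0 _ _ _ mu S mS sumS). Qed.

Definition B k : set R := \bigcup_(j >= k) S j.

Lemma mB k : measurable (B k).
Proof. by apply: bigcup_measurable => j _; exact: mS. Qed.

Lemma B_cvg : mu (B k) @[k --> \oo] --> 0%E.
Proof.
rewrite -limsup0; apply: (lim_sup_set_cvg mu S mS).
apply: (@le_lt_trans _ _ (mu D)); last by rewrite muD// ltry.
apply: le_measure; rewrite ?inE; [exact: mB|exact: measurable_itv|].
by move=> x [j _ []].
Qed.

Lemma ae_good : {ae mu, forall x, D x ->
  (forall k, exists i, u k x = (nu i)%:~R) /\ ~ lim_sup_set S x}.
Proof.
have h1 : {ae mu, forall x, forall k, D x -> exists i, u k x = (nu i)%:~R}.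
  by apply: ae_foralln => k; have [[_ H] _ _] := all_k k; exact: H.
have h2 : {ae mu, forall x, ~ lim_sup_set S x}.
  exists (lim_sup_set S); split.
  - by apply: bigcap_measurable => // k _; apply: bigcup_measurable => j _; exact: mS.
  - exact: limsup0.
  - by move=> x /= /contrapT.
apply: aeS2; [|exact: h1|exact: h2].
by move=> x H1 H2 Dx; split => // k; exact: H1.
Qed.

Lemma stable x k : D x -> ~ B k x -> forall j, (k <= j)%N -> u j x = u k x.
Proof.
move=> Dx nB j kj; rewrite -(subnKC kj).
elim: (j - k)%N => [|n IH]; first by rewrite addn0.
rewrite addnS -IH; apply/eqP; apply: contraT => ne; exfalso; apply: nB.
by exists (k + n)%N; [rewrite /= leq_addr|split].
Qed.

Definition ubar (x : R) : R := fine (limn_esup (fun n => (u n x)%:E)).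

Lemma ubar_eq x k : (forall j, (k <= j)%N -> u j x = u k x) -> ubar x = u k x.
Proof.
move=> H.
have cv : (fun n => (u n x)%:E) @ \oo --> (u k x)%:E.
  by apply: cvg_near_cst; exists k => // j /= kj; rewrite H.
by rewrite /ubar is_cvg_limn_esupE; [rewrite (cvg_lim _ cv)|apply/cvg_ex; exists (u k x)%:E].
Qed.

Lemma ubar_good x : D x -> ~ lim_sup_set S x ->
  (forall k, ~ B k x -> ubar x = u k x) /\ exists n, ubar x = u n x.
Proof.
move=> Dx nL; split => [k nB|]; first by apply: ubar_eq; exact: stable.
have [n nB] : exists n, ~ B n x.
  by apply/existsNP => H; apply: nL => n _; exact: H.
by exists n; apply: ubar_eq; exact: stable.
Qed.
Lemma ubar_meas : measurable_fun D ubar.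
Proof.
apply: measurableT_comp => //.
apply: measurable_fun_limn_esup => n; apply/measurable_EFinP.
by have [U _ _] := all_k n; exact: Uad_meas U.
Qed.

Lemma ubar_ae : {ae mu, forall x, D x ->
  [/\ (forall k, ~ B k x -> ubar x = u k x), (exists i, ubar x = (nu i)%:~R),
      (forall k, `|u k x| <= C) & `|ubar x| <= C]}.
Proof.
apply: aeS; last exact: ae_good.
move=> x H Dx; have [H1 nL] := H Dx.
have [H2 [n en]] := ubar_good x Dx nL.
have [i ei] := H1 n.
split => //; first by exists i; rewrite en.
  by move=> k; have [j ->] := H1 k; exact: C_ge.
by rewrite en ei; exact: C_ge.
Qed.

Lemma intb (f : R -> R) M : 0 <= M -> measurable_fun D f ->
  {ae mu, forall x, D x -> `|f x| <= M} -> mu.-integrable D (EFin \o f).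
Proof.
move=> M0 mf ae; apply/integrableP; split; first exact/measurable_EFinP.
apply: (@le_lt_trans _ _ (M%:E * mu D)%E); last by rewrite muD// -EFinM ltry.
apply: integral_le_bound.
- exact: measurable_itv.
- exact/measurable_EFinP.
- by rewrite lee_fin.
- by apply: aeS ae => x H Dx /=; rewrite lee_fin H.
Qed.

Lemma Uad_ubar : Uad T nu ubar.
Proof.
split; last by apply: aeS ubar_ae => x H Dx; have [] := H Dx.
have ae1 : {ae mu, forall x, D x -> `|ubar x| <= C}.
  by apply: aeS ubar_ae => x H Dx; have [] := H Dx.
exact: (intb ubar C C_ge0 ubar_meas ae1).
Qed.

Lemma L1k k : (L1norm T (fun x => (u k x - ubar x)%R) <= (C + C)%:E * mu (B k))%E.
Proof.
have [Uk _ _] := all_k k.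
have CC : 0 <= C + C by rewrite addr_ge0 ?C_ge0.
rewrite /L1norm.
apply: (@le_trans _ _ (\int[mu]_(x in D) ((C + C)%:E * (\1_(B k) x)%:E))%E).
  apply: ae_ge0_le_integral.
  - exact: measurable_itv.
  - by move=> x _; rewrite lee_fin normr_ge0.
  - apply/measurable_EFinP; apply: measurableT_comp => //.
    by apply: measurable_funB; [exact: Uad_meas Uk|exact: ubar_meas].
  - by move=> x _; rewrite mule_ge0// lee_fin ?indicE ?ler0n.
  - apply: emeasurable_funM => //; apply/measurable_EFinP.
    by apply: measurable_indic; exact: mB.
  - apply: aeS ubar_ae => x H Dx; have [Hb _ Hu Hub] := H Dx.
    rewrite -EFinM lee_fin indicE.
    case: (boolP (x \in B k)) => [_|/negP nB]; rewrite ?mulr1 ?mulr0.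
      by rewrite (le_trans (ler_normB _ _))// lerD.
    have nB' : ~ B k x by move=> Bx; apply: nB; exact: mem_set.
    by rewrite (Hb k nB') subrr normr0.
rewrite ge0_integralZl_EFin//; first last. all: try (by apply/measurable_EFinP; apply: measurable_indic; exact: mB).
all: try (by move=> x _; rewrite lee_fin indicE ler0n). all: try (exact: measurable_itv).
rewrite integral_indic; first last.
- exact: mB.
- exact: measurable_itv.
apply: lee_wpmul2l; first by rewrite lee_fin.
apply: le_measure; rewrite ?inE; [|exact: mB|by move=> x []].
by apply: measurableI; [exact: mB|exact: measurable_itv].
Qed.

Lemma L1_cvg : (fun k => L1norm T (fun x => u k x - ubar x)) @ \oo --> 0%E.
Proof.
apply: (@squeeze_cvge _ _ _ _ (cst 0%E) _ (fun k => ((C + C)%:E * mu (B k))%E)).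
- apply: nearW => k; rewrite L1k andbT /L1norm.
  by apply: integral_ge0 => x _; rewrite lee_fin normr_ge0.
- exact: cvg_cst.
- rewrite -(mule0 (C + C)%:E); apply: cvgeZl => //; exact: B_cvg.
Qed.

Definition Mtv : R := (E 0%N - m) / beta.

Lemma TV_le k : (TV T (u k) <= Mtv%:E)%E.
Proof.
have [[L1 _] _ _] := all_k k.
rewrite TVfin lee_fin /Mtv ler_pdivlMr// mulrC.
have : E k <= E 0%N by exact: E_noninc.
rewrite /E => H; have := hm _ L1; lra.
Qed.

Lemma L1_le k : (L1norm T (u k) <= (C * T)%:E)%E.
Proof.
have [Uk _ _] := all_k k.
rewrite EFinM -(muD _ hT) /L1norm.
under eq_integral => x _ do rewrite -abse_EFin.
apply: (integral_le_bound (C%:E)).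
- exact: measurable_itv.
- apply/measurable_EFinP; exact: Uad_meas Uk.
- by rewrite lee_fin C_ge0.
- by apply: aeS (Uad_bound Uk) => x H Dx /=; rewrite lee_fin H.
Qed.
Lemma TV_ubar : (TV T ubar <= Mtv%:E)%E.
Proof.
apply: ge_ereal_sup => _ [phi [Cphi phi1] <-].
set g := derive1 phi.
have [der [cg _]] := Cphi.
have [c c0T Kmax] : exists2 c, c \in `[0, T] & forall t, t \in `[0, T] -> `|g t| <= `|g c|.
  apply: (EVT_max (f := fun x => `|g x|)); first exact: ltW.
  apply: continuous_subspaceT => x.
  by apply: continuous_comp; [exact: cg|exact: norm_continuous].
set K := `|g c|.
have K0 : 0 <= K by exact: normr_ge0.
have gK : forall x, D x -> `|g x| <= K.
  move=> x; rewrite /D /Dom /= in_itv/= => /andP[x0 xT].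
  by apply: Kmax; rewrite in_itv/= !ltW.
have mg : measurable_fun D g.
  apply: (measurable_funS measurableT) => //; exact: continuous_measurable_fun.
have Hk : forall k, (\int[mu]_(x in D) (ubar x * g x)%:E <=
    Mtv%:E + K%:E * L1norm T (fun x => (u k x - ubar x)%R))%E.
  move=> k; have [Uk _ _] := all_k k.
  have mu_ := Uad_meas Uk.
  have iu : mu.-integrable D (EFin \o (fun x => u k x * g x)).
    apply: (intb _ (C * K)); first by rewrite mulr_ge0// C_ge0.
      exact: measurable_funM.
    apply: aeS (Uad_bound Uk) => x H Dx; rewrite normrM.
    by apply: ler_pM; [exact: normr_ge0|exact: normr_ge0|exact: H|exact: gK].
  have ib : mu.-integrable D (EFin \o (fun x => ubar x * g x)).
    apply: (intb _ (C * K)); first by rewrite mulr_ge0// C_ge0.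
      by apply: measurable_funM => //; exact: ubar_meas.
    apply: aeS ubar_ae => x H Dx; have [_ _ _ Hb] := H Dx; rewrite normrM.
    by apply: ler_pM; [exact: normr_ge0|exact: normr_ge0|exact: Hb|exact: gK].
  have id : mu.-integrable D (EFin \o (fun x => `|u k x - ubar x|)).
    apply: (intb _ (C + C)); first by rewrite addr_ge0// C_ge0.
      apply: measurableT_comp => //; apply: measurable_funB => //; exact: ubar_meas.
    apply: aeS ubar_ae => x H Dx; have [_ _ Hu Hb] := H Dx.
    by rewrite normr_id (le_trans (ler_normB _ _))// lerD.
  apply: (@le_trans _ _ (\int[mu]_(x in D)
      ((u k x * g x)%:E + K%:E * (`|u k x - ubar x|)%:E))%E).
    apply: le_integral => //.
    - exact: measurable_itv.
    - apply: integrableD => //; first exact: measurable_itv.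
      by apply: integrableZl => //; exact: measurable_itv.
    - move=> x /set_mem Dx; rewrite -EFinM -EFinD lee_fin.
      have e1 : ubar x * g x - u k x * g x <= K * `|u k x - ubar x|.
        rewrite -mulrBl; apply: le_trans (ler_norm _) _.
        by rewrite normrM distrC mulrC ler_wpM2r// ?normr_ge0// gK.
      lra.
  rewrite integralD//; first last.
  - by apply: integrableZl => //; exact: measurable_itv.
  - exact: measurable_itv.
  rewrite integralZl//; last exact: measurable_itv.
  apply: leeD; last by [].
  apply: le_trans (TV_le k).
  by apply: ereal_sup_ubound; exists phi.
have cv : (fun k => Mtv%:E + K%:E * L1norm T (fun x => (u k x - ubar x)%R))%E @ \oo
    --> (Mtv%:E)%E.
  rewrite -[X in _ --> X]adde0; apply: cvgeD => //; first exact: cvg_cst.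
  by rewrite -(mule0 K%:E); apply: cvgeZl => //; exact: L1_cvg.
rewrite -(cvg_lim _ cv)//; apply: lime_ge; first exact: (cvgP _ cv).
exact: nearW.
Qed.
Lemma main_sec :
  [/\ (exists M : R, forall k, L2norm T (u k) <= M /\ L2norm T (gradF (u k)) <= M),
      ((forall k, ((F (u k.+1))%:E + Gfun T beta nu (u k.+1)
                    <= (F (u k))%:E + Gfun T beta nu (u k))%E) /\
       exists l : R, ((F (u k))%:E + Gfun T beta nu (u k))%E @[k --> \oo] --> l%:E),
      (fun k => L2norm T (fun x => u k.+1 x - u k x)) @ \oo --> 0 &
      exists ubar : R -> R,
        [/\ Uad T nu ubar, inBV T ubar,
            (exists M : R, forall k, (L1norm T (u k) + TV T (u k) <= M%:E)%E) &
            (fun k => L1norm T (fun x => u k x - ubar x)) @ \oo --> 0%E]].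
Proof.
split.
- exact: part1.
- exact: part2.
- exact: dn_cvg.
exists ubar; split.
- exact: Uad_ubar.
- split; first by have [] := Uad_ubar.
  by apply: le_lt_trans TV_ubar _; exact: ltry.
- exists (C * T + Mtv) => k; rewrite EFinD; apply: leeD; [exact: L1_le|exact: TV_le].
- exact: L1_cvg.
Qed.
End Main.

Theorem theorem4p1 (R : realType) (T beta eta Lip : R) (d : nat)
    (nu : 'I_d -> int) (F : (R -> R) -> R) (gradF : (R -> R) -> (R -> R))
    (u : nat -> R -> R) :
  0 < T -> 0 < beta -> 0 < eta ->
  (forall i j : 'I_d, (i < j)%N -> nu i < nu j) ->
  F_assumptions T F gradF ->
  (forall v w, inL2 T v -> inL2 T w ->
     L2norm T (fun x => gradF v x - gradF w x)
       <= Lip * L2norm T (fun x => v x - w x)) ->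
  Uad T nu (u 0%N) -> inBV T (u 0%N) ->
  prox_grad_seq T beta nu F gradF eta u ->
  [/\ (exists M : R, forall k, L2norm T (u k) <= M /\ L2norm T (gradF (u k)) <= M),
      ((forall k, ((F (u k.+1))%:E + Gfun T beta nu (u k.+1)
                    <= (F (u k))%:E + Gfun T beta nu (u k))%E) /\
       exists l : R, ((F (u k))%:E + Gfun T beta nu (u k))%E @[k --> \oo] --> l%:E),
      (fun k => L2norm T (fun x => u k.+1 x - u k x)) @ \oo --> 0 &
      exists ubar : R -> R,
        [/\ Uad T nu ubar, inBV T ubar,
            (exists M : R, forall k, (L1norm T (u k) + TV T (u k) <= M%:E)%E) &
            (fun k => L1norm T (fun x => u k x - ubar x)) @ \oo --> 0%E]].
Proof.
move=> hT hb he _ [_ [m hm] hg _] hL hU0 hBV0 [tau Htau].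
exact: (@main_sec R T beta eta Lip d nu F gradF u hT hb he m hm hg hL hU0 hBV0 tau Htau).
Qed.
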